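(* Let $K\ge0$ and $p\in(1,2)$. Then there exists $\varepsilon\in(0,\frac{p-1}{2})$ (depending on $K$ and $p$) such that for all $a,b\in\mathbb R^d$, $$\Psi(a,b,p)\ge\Gamma(a,b,K,\varepsilon,p),$$ where $$\Psi(a,b,p)=|a+b|^p-|a|^p-p|a|^{p-2}\langle a,b\rangle\mathbf 1_{a\ne0},$$ $$\Gamma(a,b,K,\varepsilon,p)=2Kp|a|^{p-1}|b|\mathbf 1_{|b|\ge\vartheta(\varepsilon,p)|a|}+p\varepsilon|a|^{p-2}|b|^2\mathbf 1_{|b|<\vartheta(\varepsilon,p)|a|},$$ $$\vartheta(\varepsilon,p)=\sqrt{\frac12\Big(\frac{p-1}{2\varepsilon}\Big)^{\frac{2}{2-p}}+\frac12}-1.$$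
   Context: In $\Gamma$, when $a=0$ the second indicator vanishes and $|a|^{p-1}=0$, so $\Gamma(0,b,K,\varepsilon,p)=0$ for $b\neq 0$ interpreted via the first term (which equals $0$). *)

(* Defs.v *)
From HB Require Import structures.
From mathcomp Require Import all_boot all_order all_algebra.
From mathcomp Require Import all_classical all_reals all_analysis.
Set Implicit Arguments. Unset Strict Implicit. Unset Printing Implicit Defensive.
Import Order.TTheory GRing.Theory Num.Theory.
Local Open Scope ring_scope.

Section Defs.
Variables (R : realType) (d : nat).

Definition dotv (a b : 'rV[R]_d) : R := \sum_(i < d) a ord0 i * b ord0 i.
Definition normv (a : 'rV[R]_d) : R := Num.sqrt (dotv a a).

Definition Psi (a b : 'rV[R]_d) (p : R) : R :=
  normv (a + b) `^ p - normv a `^ p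
  - (if a != 0 then p * normv a `^ (p - 2) * dotv a b else 0).

End Defs.

Definition theta (R : realType) (eps p : R) : R :=
  Num.sqrt (2^-1 * (((p - 1) / (2 * eps)) `^ (2 / (2 - p))) + 2^-1) - 1.

Definition Gamma (R : realType) (d : nat) (a b : 'rV[R]_d) (K eps p : R) : R :=
  (if theta eps p * normv a <= normv b
   then 2 * K * p * normv a `^ (p - 1) * normv b else 0)
  + (if normv b < theta eps p * normv a
     then p * eps * normv a `^ (p - 2) * normv b ^+ 2 else 0).

(* Main.v *)
Require Import Defs.
From HB Require Import structures.
From mathcomp Require Import all_boot all_order all_algebra.
From mathcomp Require Import all_classical all_reals all_analysis.
From mathcomp Require Import ring lra.
Set Implicit Arguments. Unset Strict Implicit. Unset Printing Implicit Defensive.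
Import Order.TTheory GRing.Theory Num.Theory.
Import numFieldNormedType.Exports.
Local Open Scope classical_set_scope.
Local Open Scope ring_scope.

Section Aux.
Context {R : realType}.

Lemma bern (r t : R) : 0 <= r <= 1 -> 0 <= t -> t `^ r <= 1 + r * (t - 1).
Proof.
move=> /andP[r0 r1] t0.
have [->|rn0] := eqVneq r 0; first by rewrite powRr0 mul0r addr0.
have [->|rn1] := eqVneq r 1; first by rewrite powRr1 // mul1r addrC subrK.
have rp : 0 < r by rewrite lt_def rn0 r0.
have rl : r < 1 by rewrite lt_def eq_sym rn1 r1.
have ri : 0 < r^-1 by rewrite invr_gt0.
have ri' : 0 < (1 - r)^-1 by rewrite invr_gt0 subr_gt0.
have h := @conjugate_powR R (t `^ r) 1 r^-1 (1 - r)^-1 (powR_ge0 _ _) ler01 ri ri'.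
have e : r^-1^-1 + (1-r)^-1^-1 = 1 by rewrite !invrK; ring.
move: (h e) => {}h.
rewrite mulr1 -powRrM mulfV // powRr1 // powR1 in h.
rewrite (le_trans h) // !invrK; lra.
Qed.

Lemma tang (r v w : R) : 0 <= r <= 1 -> 0 < v -> 0 <= w ->
  w `^ r <= v `^ r + r * v `^ (r - 1) * (w - v).
Proof.
move=> r01 v0 w0.
have wv : w = v * (w / v) by rewrite mulrC divfK // gt_eqF.
have h := bern r01 (divr_ge0 w0 (ltW v0)).
rewrite {1}wv powRM ?(ltW v0) ?divr_ge0 ?(ltW v0) //.
rewrite powRB; last by rewrite (gt_eqF v0) implybT.
rewrite powRr1 ?(ltW v0) //.
have vr := powR_gt0 r v0.
apply: le_trans (ler_wpM2l (ltW vr) h) _.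
rewrite le_eqVlt; apply/orP; left; apply/eqP.

 by field; rewrite gt_eqF.
Qed.

Lemma mono_up (f df : R -> R) (a b : R) : a <= b ->
  (forall x : R, a <= x <= b -> is_derive x 1 f (df x)) ->
  (forall x, a <= x <= b -> 0 <= df x) -> f a <= f b.
Proof.
move=> ab hd hpos.
have hd' : forall x, x \in `]a, b[ -> is_derive x 1 f (df x).
  by move=> x; rewrite in_itv /= => /andP[ax xb]; apply: hd; rewrite !ltW.
rewrite -subr_ge0.
have [|c cab ->] := MVT_segment ab hd'.
  have cont x : a <= x <= b -> {for x, continuous f}.
    move=> xab; apply/differentiable_continuous; rewrite -derivable1_diffP.
    by have [] := hd x xab.
  apply: derivable_oo_LRcontinuous_within; split.
  - by move=> x /hd' [].
  - by apply: cvg_at_right_filter; apply: cont; rewrite lexx ab.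
  - by apply: cvg_at_left_filter; apply: cont; rewrite lexx ab.
apply: mulr_ge0; last by rewrite subr_ge0.
  by apply: hpos; move: cab; rewrite in_itv.
Qed.

Lemma deriv_g (p C z : R) : 0 < z + 1 ->
  is_derive z 1 (fun z => (z + 1) `^ p - p * z - C * z ^+ 2)
    (p * (z + 1) `^ (p - 1) - p - C * (2 * z)).
Proof.
move=> z0.
have h1 : is_derive z 1 ((@powR R ^~ p) \o shift 1) (p * (z + 1) `^ (p - 1) * 1).
  apply: is_derive1_comp; last exact: is_derive_shift.
  exact: is_derive1_powR.
have h2 : is_derive z 1 (p \*: id) (p *: (1:R)) by apply: is_deriveZ.
have h3 : is_derive z 1 (C \*: (id * id)) (C *: (id z *: (1:R) + id z *: 1)).
  by apply: is_deriveZ; apply: is_deriveM.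
have := is_deriveB (is_deriveB h1 h2) h3.
move=> H.
have -> : (fun z1 : R => (z1 + 1) `^ p - p * z1 - C * z1 ^+ 2) =
  ((@powR R ^~ p) \o shift 1 - p \*: id - C \*: (id * id)).
  by apply/funext => y /=; rewrite expr2.
apply: is_derive_eq H _.
rewrite /GRing.scale /= !mulr1; ring.
Qed.

Lemma mono_down (f df : R -> R) (a b : R) : a <= b ->
  (forall x : R, a <= x <= b -> is_derive x 1 f (df x)) ->
  (forall x, a <= x <= b -> df x <= 0) -> f b <= f a.
Proof.
move=> ab hd hneg.
have := @mono_up (- f) (fun x => - df x) a b ab.
rewrite /= lerN2; apply.
- move=> x xab; exact: is_deriveN (hd x xab).
- by move=> x xab; rewrite oppr_ge0 hneg.
Qed.

Lemma deriv_aff (p c e z : R) : 0 < c + e * z ->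
  is_derive z 1 (fun t => (c + e * t) `^ p) (p * (c + e * z) `^ (p - 1) * e).
Proof.
move=> hz.
have hg := is_deriveD (is_derive_cst c z 1) (is_deriveZ e (is_derive_id z (1:R))).
have hp : is_derive ((cst c + e \*: id) z) 1 (@powR R ^~ p)
   (p * ((cst c + e \*: id) z) `^ (p - 1)).
  by apply: is_derive1_powR.
have := is_derive1_comp hp hg.
have -> : (@powR R ^~ p) \o (cst c + e \*: id) = (fun t => (c + e * t) `^ p) by [].
have -> : p * (c + e * z) `^ (p - 1) * e =
   p * (cst c + e \*: id) z `^ (p - 1) * (0 + e%:A).
  by rewrite /= add0r /GRing.scale /= mulr1.
by [].
Qed.


Lemma deriv_F2 (p Y t : R) : 0 < Y - t -> 0 < Y + t ->
  is_derive t 1 (fun t => (Y + t) `^ p - (Y - t) `^ p - 2 * p * Y * t)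
    (p * (Y + t) `^ (p - 1) + p * (Y - t) `^ (p - 1) - 2 * p * Y).
Proof.
move=> h1 h2.
have d1 := @deriv_aff p Y 1 t; rewrite mul1r in d1; have {}d1 := d1 h2.
have d2 := @deriv_aff p Y (-1) t; rewrite mulN1r in d2; have {}d2 := d2 h1.
have d3 := is_deriveZ (2 * p * Y) (is_derive_id t (1:R)).
have := is_deriveB (is_deriveB d1 d2) d3.
have -> : ((fun t => (Y + 1 * t) `^ p) - (fun t => (Y + -1 * t) `^ p) - (2 * p * Y) \*: id)
   = (fun t => (Y + t) `^ p - (Y - t) `^ p - 2 * p * Y * t).
  apply/funext => u.
  change ((Y + 1 * u) `^ p - (Y + -1 * u) `^ p - (2 * p * Y) * u = (Y + u) `^ p - (Y - u) `^ p - 2 * p * Y * u).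
  by rewrite mul1r mulN1r.
have -> : p * (Y + t) `^ (p - 1) + p * (Y - t) `^ (p - 1) - 2 * p * Y =
  p * (Y + t) `^ (p - 1) * 1 - p * (Y - t) `^ (p - 1) * -1 - (2 * p * Y) *: (1:R).
  by rewrite /GRing.scale /= !mulr1 mulrN1 opprK.
by [].
Qed.

Lemma powR_le_neg (r x y : R) : r <= 0 -> 0 < x -> x <= y -> y `^ r <= x `^ r.
Proof.
move=> r0 x0 xy.
have y0 : 0 < y := lt_le_trans x0 xy.
have [s -> s0] : exists2 s, r = - s & 0 <= s by exists (- r); rewrite ?opprK ?oppr_ge0.
rewrite !powRN lef_pV2 ?posrE ?powR_gt0 //.
by apply: ge0_ler_powR => //; rewrite nnegrE ltW.
Qed.

Lemma KL_pos (p M y : R) : 1 < p < 2 -> 0 <= y -> y + 1 <= M ->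
  p * (p - 1) / 2 * M `^ (p - 2) * y ^+ 2 <= (y + 1) `^ p - 1 - p * y.
Proof.
move=> /andP[p1 p2] y0 yM.
set C := p * (p - 1) / 2 * M `^ (p - 2).
have hd : forall x, 0 <= x <= y -> is_derive x 1
    (fun z => (z + 1) `^ p - p * z - C * z ^+ 2)
    (p * (x + 1) `^ (p - 1) - p - C * (2 * x)).
  by move=> x /andP[x0 _]; apply: deriv_g; lra.
have hnn : forall x, 0 <= x <= y -> 0 <= p * (x + 1) `^ (p - 1) - p - C * (2 * x).
  move=> x /andP[x0 xy].
  have x1 : 0 < x + 1 by lra.
  have := @tang (p - 1) (x + 1) 1; rewrite powR1.
  have e : p - 1 - 1 = p - 2 by ring.
  rewrite e => /(_ _ x1 ler01) T.
  have T' : 0 <= p - 1 <= 1 by apply/andP; split; lra.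
  have {T T'}T := T T'.
  have Q : M `^ (p - 2) <= (x + 1) `^ (p - 2) by apply: powR_le_neg => //; lra.
  have P0 : 0 <= M `^ (p - 2) := powR_ge0 _ _.
  rewrite /C.
  set P := (x + 1) `^ (p - 1) in T *.
  set Q1 := (x + 1) `^ (p - 2) in T Q *.
  set m := M `^ (p - 2) in Q P0 *.
  have h1 : 0 <= (p - 1) * x * (Q1 - m) by apply: mulr_ge0; [apply: mulr_ge0|]; lra.
  nra.
have H := @mono_up _ _ 0 y y0 hd hnn.
rewrite /= add0r powR1 mulr0 expr0n /= mulr0 !subr0 in H.
lra.
Qed.

Lemma KL_neg (p M y : R) : 1 < p < 2 -> 1 <= M -> -1 < y -> y <= 0 ->
  p * (p - 1) / 2 * M `^ (p - 2) * y ^+ 2 <= (y + 1) `^ p - 1 - p * y.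
Proof.
move=> /andP[p1 p2] M1 y1 y0.
set C := p * (p - 1) / 2 * M `^ (p - 2).
have hd : forall x, y <= x <= 0 -> is_derive x 1
    (fun z => (z + 1) `^ p - p * z - C * z ^+ 2)
    (p * (x + 1) `^ (p - 1) - p - C * (2 * x)).
  by move=> x /andP[yx _]; apply: deriv_g; lra.
have hnp : forall x, y <= x <= 0 -> p * (x + 1) `^ (p - 1) - p - C * (2 * x) <= 0.
  move=> x /andP[yx x0].
  have x1 : 0 <= x + 1 by lra.
  have T' : 0 <= p - 1 <= 1 by apply/andP; split; lra.
  have T := bern T' x1.
  have m1 : M `^ (p - 2) <= 1.
    have e1 : (1:R) `^ (p - 2) = 1 by rewrite powR1.
    by rewrite -[X in _ <= X]e1; apply: powR_le_neg => //; lra.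
  have P0 : 0 <= M `^ (p - 2) := powR_ge0 _ _.
  rewrite /C.
  set P := (x + 1) `^ (p - 1) in T *.
  set m := M `^ (p - 2) in m1 P0 *.
  have h1 : 0 <= (p - 1) * (- x) * (1 - m) by apply: mulr_ge0; [apply: mulr_ge0|]; lra.
  nra.
have H := @mono_down _ _ y 0 y0 hd hnp.
rewrite /= add0r powR1 mulr0 expr0n /= mulr0 !subr0 in H.
lra.
Qed.

Lemma sym_bound (p Y : R) : 1 < p < 2 -> 1 < Y ->
  (Y + 1) `^ p - (Y - 1) `^ p - 2 * p * Y <= 0.
Proof.
move=> /andP[p1 p2] Y1.
have hd : forall t : R, 0 <= t <= 1 -> is_derive t 1
    (fun t => (Y + t) `^ p - (Y - t) `^ p - 2 * p * Y * t)
    (p * (Y + t) `^ (p - 1) + p * (Y - t) `^ (p - 1) - 2 * p * Y).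
  by move=> t /andP[t0 t1]; apply: deriv_F2; lra.
have hnp : forall t : R, 0 <= t <= 1 ->
    p * (Y + t) `^ (p - 1) + p * (Y - t) `^ (p - 1) - 2 * p * Y <= 0.
  move=> t /andP[t0 t1].
  have T' : 0 <= p - 1 <= 1 by apply/andP; split; lra.
  have Y0 : 0 < Y by lra.
  have A1 := @tang (p - 1) Y (Y + t) T' Y0 ltac:(lra).
  have A2 := @tang (p - 1) Y (Y - t) T' Y0 ltac:(lra).
  have A3 : Y `^ (p - 1) <= Y by apply: ler1_powR; lra.
  set u := Y `^ (p - 1 - 1) in A1 A2.
  set P1 := (Y + t) `^ (p - 1) in A1 *.
  set P2 := (Y - t) `^ (p - 1) in A2 *.
  set y1 := Y `^ (p - 1) in A1 A2 A3.
  nra.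
have H := @mono_down _ _ 0 1 ler01 hd hnp.
rewrite /= !addr0 subr0 mulr0 subrr subr0 mulr1 in H.
exact: H.
Qed.

Lemma KL (p M y : R) : 1 < p < 2 -> `|y| + 1 <= M ->
  p * (p - 1) / 2 * M `^ (p - 2) * y ^+ 2 <= `|1 + y| `^ p - 1 - p * y.
Proof.
move=> /andP[p1 p2] yM.
have pp : 1 < p < 2 by apply/andP.
have M1 : 1 <= M by have := normr_ge0 y; lra.
have [y0|y0] := leP 0 y.
  rewrite ger0_norm in yM; last by [].
  rewrite ger0_norm; last by lra.
  by rewrite (addrC 1 y); apply: KL_pos.
have [y1|y1] := ltP (-1) y.
  rewrite ger0_norm; last by lra.
  by rewrite (addrC 1 y); apply: KL_neg => //; lra.
rewrite ltr0_norm in yM; last by [].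
rewrite le_eqVlt in y1; case/orP: y1 => [/eqP ey|y1].
  have -> : 1 + y = 0 by lra.
  rewrite normr0 powR0; last by apply/eqP => e; rewrite e in p1; lra.
  have m1 : M `^ (p - 2) <= 1.
    have e1 : (1:R) `^ (p - 2) = 1 by rewrite powR1.
    by rewrite -[X in _ <= X]e1; apply: powR_le_neg => //; lra.
  have P0 : 0 <= M `^ (p - 2) := powR_ge0 _ _.
  set m := M `^ (p - 2) in m1 P0 *.
  have -> : y ^+ 2 = 1 by rewrite expr2; nra.
  have h1 : 0 <= (p * (p - 1)) * (1 - m) by apply: mulr_ge0; nra.
  have h2 : 0 <= (p - 1) * (2 - p) by nra.
  rewrite ey; nra.
rewrite ltr0_norm; last by lra.
have S := @sym_bound p (- y) pp ltac:(lra).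
have K := @KL_pos p M (- y) pp ltac:(lra) ltac:(lra).
rewrite sqrrN in K.
have -> : - (1 + y) = - y - 1 by ring.
lra.
Qed.

Lemma pow_sq (a p : R) : 0 <= a -> a `^ p = (a ^+ 2) `^ (p / 2).
Proof.
move=> a0; rewrite -powR_mulrn // -powRrM; congr (_ `^ _).
by rewrite mulrC divfK // pnatr_eq0.
Qed.

Lemma phi_dec (r v w : R) : 0 <= r <= 1 -> 1 <= v -> v <= w ->
  w `^ r - r * w <= v `^ r - r * v.
Proof.
move=> r01 v1 vw.
have v0 : 0 < v by lra.
have T := @tang r v w r01 v0 ltac:(lra).
have U : v `^ (r - 1) <= 1.
  have e1 : (1:R) `^ (r - 1) = 1 by rewrite powR1.
  rewrite -[X in _ <= X]e1; apply: powR_le_neg => //; move/andP: r01 => [? ?]; lra.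
have U0 : 0 <= v `^ (r - 1) := powR_ge0 _ _.
move/andP: r01 => [r0 r1].
set u := v `^ (r - 1) in T U U0.
have h : 0 <= r * (1 - u) * (w - v) by apply: mulr_ge0; [apply: mulr_ge0|]; lra.
nra.
Qed.

Lemma phi_inc (r v w : R) : 0 <= r <= 1 -> 0 <= v -> v <= w -> w <= 1 ->
  v `^ r - r * v <= w `^ r - r * w.
Proof.
move=> r01 v0 vw w1.
have [w0|w0] := leP w 0.
  have -> : v = w by lra.
  by [].
have T := @tang r w v r01 w0 v0.
have U : 1 <= w `^ (r - 1).
  have e1 : (1:R) `^ (r - 1) = 1 by rewrite powR1.
  rewrite -[X in X <= _]e1; apply: powR_le_neg => //; move/andP: r01 => [? ?]; lra.
move/andP: r01 => [r0 r1].
set u := w `^ (r - 1) in T U.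
have h : 0 <= r * (u - 1) * (w - v) by apply: mulr_ge0; [apply: mulr_ge0|]; lra.
nra.
Qed.

Definition hh (p y : R) := `|1 + y| `^ p - 1 - p * y.

Lemma reduce1 (p n s x : R) : 1 < p < 2 -> 0 <= n -> 0 <= x -> `|s| <= x ->
  n ^+ 2 = 1 + 2 * s + x ^+ 2 ->
  exists y, `|y| = x /\ hh p y <= n `^ p - 1 - p * s.
Proof.
move=> /andP[p1 p2] n0 x0 sx nE.
have r01 : 0 <= p / 2 <= 1 by apply/andP; split; lra.
have [sl su] : - x <= s /\ s <= x by move: sx; rewrite ler_norml => /andP[]; split.
rewrite /hh (pow_sq p n0) nE.
have key : forall y, (1 + y) ^+ 2 = 1 + 2 * y + x ^+ 2 -> p * y = p / 2 * ((1 + y) ^+ 2 - 1 - x ^+ 2).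
  by move=> y ->; field.
have ks : p * s = p / 2 * ((1 + 2 * s + x ^+ 2) - 1 - x ^+ 2) by field.
have [v1|v1] := leP 1 (1 + 2 * s + x ^+ 2).
- exists x; split; first by rewrite ger0_norm.
  rewrite (pow_sq p (normr_ge0 _)) real_normK ?num_real //.
  rewrite (key x); last by ring.
  rewrite ks.
  have := @phi_dec (p / 2) (1 + 2 * s + x ^+ 2) ((1 + x) ^+ 2) r01 v1 ltac:(nra).
  lra.
- exists (- x); split; first by rewrite normrN ger0_norm.
  rewrite (pow_sq p (normr_ge0 _)) real_normK ?num_real //.
  rewrite (key (- x)); last by ring.
  rewrite ks.
  have := @phi_inc (p / 2) ((1 + - x) ^+ 2) (1 + 2 * s + x ^+ 2) r01 (sqr_ge0 _) ltac:(nra) ltac:(lra).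
  lra.
Qed.

End Aux.
Section Vec.
Context {R : realType} {d : nat}.
Implicit Types a b c : 'rV[R]_d.

Lemma dotvC a b : dotv a b = dotv b a.
Proof. by rewrite /dotv; apply: eq_bigr => i _; rewrite mulrC. Qed.

Lemma dotvDl a b c : dotv (a + b) c = dotv a c + dotv b c.
Proof. by rewrite /dotv -big_split; apply: eq_bigr => i _; rewrite mxE mulrDl. Qed.

Lemma dotvZl (t : R) a c : dotv (t *: a) c = t * dotv a c.
Proof. by rewrite /dotv mulr_sumr; apply: eq_bigr => i _; rewrite mxE mulrA. Qed.

Lemma dotvDr a b c : dotv c (a + b) = dotv c a + dotv c b.
Proof. by rewrite !(dotvC c) dotvDl. Qed.

Lemma dotvZr (t : R) a c : dotv c (t *: a) = t * dotv c a.
Proof. by rewrite !(dotvC c) dotvZl. Qed.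

Lemma dotv_ge0 a : 0 <= dotv a a.
Proof. by rewrite /dotv; apply: sumr_ge0 => i _; rewrite -expr2 sqr_ge0. Qed.

Lemma dotv0l c : dotv 0 c = 0.
Proof. by rewrite /dotv big1 // => i _; rewrite mxE mul0r. Qed.

Lemma normv_ge0 a : 0 <= normv a.
Proof. exact: sqrtr_ge0. Qed.

Lemma normv_sq a : normv a ^+ 2 = dotv a a.
Proof. by rewrite /normv sqr_sqrtr // dotv_ge0. Qed.

Lemma normv0 : normv (0 : 'rV[R]_d) = 0.
Proof. by rewrite /normv dotv0l sqrtr0. Qed.

Lemma dotv_eq0 a b : dotv b b = 0 -> dotv a b = 0.
Proof.
move=> h.
have pos : forall i : 'I_d, true -> 0 <= b ord0 i * b ord0 i.
  by move=> i _; rewrite -expr2 sqr_ge0.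
have H := psumr_eq0P pos h.
rewrite /dotv big1 // => i _.
have : b ord0 i * b ord0 i = 0 by apply: H.
by move/eqP; rewrite mulf_eq0 orbb => /eqP ->; rewrite mulr0.
Qed.

Lemma CS a b : `|dotv a b| <= normv a * normv b.
Proof.
have [h|h] := eqVneq (dotv b b) 0.
  by rewrite dotv_eq0 // normr0 mulr_ge0 // normv_ge0.
have Bp : 0 < dotv b b by rewrite lt_def h dotv_ge0.
set t := dotv a b / dotv b b.
have H := dotv_ge0 (a - t *: b).
rewrite -scaleNr !dotvDl !dotvDr !dotvZl !dotvZr (dotvC b a) in H.
have E : t * dotv b b = dotv a b by rewrite /t divfK.
have Q : dotv a b ^+ 2 <= dotv a a * dotv b b.
  have H2 : 0 <= dotv b b * (dotv a a - 2 * t * dotv a b + t * (t * dotv b b)).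
    apply: mulr_ge0; [exact: ltW| lra].
  rewrite E in H2.
  have E2 : dotv b b * (2 * t * dotv a b) = 2 * dotv a b ^+ 2 by rewrite -E; ring.
  nra.
have : `|dotv a b| ^+ 2 <= (normv a * normv b) ^+ 2.
  by rewrite exprMn !normv_sq real_normK ?num_real.
have := normv_ge0 a; have := normv_ge0 b; have := normr_ge0 (dotv a b).
set u := `|dotv a b|; set A := normv a; set B := normv b.
move=> u0 B0 A0 Hsq.
have AB0 : 0 <= A * B by apply: mulr_ge0.
rewrite leNgt; apply/negP => lt.
have : (A * B) ^+ 2 < u ^+ 2 by rewrite ltr_pXn2r // ?nnegrE.
lra.
Qed.

Lemma normvD_sq a b : normv (a + b) ^+ 2 = normv a ^+ 2 + 2 * dotv a b + normv b ^+ 2.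
Proof.
rewrite !normv_sq dotvDl !dotvDr (dotvC b a); ring.
Qed.
End Vec.

Section Main.
Context {R : realType}.

Lemma scalar_main (p K eps T A B s N : R) : 1 < p < 2 -> 0 <= K -> 1 <= T ->
  T `^ (p - 1) = 1 + 8 * K / (p - 1) -> eps <= (p - 1) / 2 * (1 + T) `^ (p - 2) ->
  0 < eps -> 0 < A -> 0 <= B -> 0 <= N -> `|s| <= A * B ->
  N ^+ 2 = A ^+ 2 + 2 * s + B ^+ 2 ->
  (if T * A <= B then 2 * K * p * A `^ (p - 1) * B else 0) +
  (if B < T * A then p * eps * A `^ (p - 2) * B ^+ 2 else 0)
   <= N `^ p - A `^ p - p * A `^ (p - 2) * s.
Proof.
move=> pp K0 T1 TE epsT eps0 A0 B0 N0 CS NE.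
have /andP[p1 p2] := pp.
have An0 : A != 0 by rewrite gt_eqF.
set x := B / A; set sg := s / A ^+ 2; set n := N / A.
have x0 : 0 <= x by rewrite divr_ge0 // ltW.
have n0 : 0 <= n by rewrite divr_ge0 // ltW.
have nE : n ^+ 2 = 1 + 2 * sg + x ^+ 2.
  by rewrite /n /sg /x !expr_div_n NE; field.
have sx : `|sg| <= x.
  rewrite /sg /x normrM normfV (ger0_norm (sqr_ge0 A)).
  rewrite ler_pdivrMr ?exprn_gt0 //.
  by have -> : B / A * A ^+ 2 = A * B by field.
have [y [ny hy]] := reduce1 pp n0 x0 sx nE.
set Ap := A `^ p.
have Ap0 : 0 < Ap by rewrite /Ap powR_gt0.
have e1 : A `^ (p - 1) = Ap / A.
  by rewrite powRB ?An0 ?implybT // powRr1 // ltW.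
have e2 : A `^ (p - 2) = Ap / A ^+ 2.
  by rewrite powRB ?An0 ?implybT // powR_mulrn // ltW.
have eN : N `^ p = Ap * n `^ p.
  by rewrite /Ap -powRM ?(ltW A0) // /n mulrC divfK.
have E1 : N `^ p - A `^ p - p * A `^ (p - 2) * s = Ap * (n `^ p - 1 - p * sg).
  by rewrite eN e2 /sg -/Ap; field.
rewrite E1.
have TA : (T * A <= B) = (T <= x) by rewrite /x ler_pdivlMr.
have TB : (B < T * A) = (x < T) by rewrite /x ltr_pdivrMr.
rewrite TA TB.
have y2 : y ^+ 2 = x ^+ 2 by rewrite -ny real_normK ?num_real.
have [Tx|xT] := leP T x.
- rewrite addr0.
  have -> : 2 * K * p * A `^ (p - 1) * B = Ap * (2 * K * p * x) by rewrite e1 /x; field.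
  apply: ler_wpM2l; first exact: ltW.
  apply: le_trans hy.
  have := @KL _ p (1 + x) y pp; rewrite ny addrC => /(_ (lexx _)).
  apply: le_trans.
  rewrite y2.
  have x1 : 1 <= x by lra.
  have Q1 : (2 * x) `^ (p - 2) <= (1 + x) `^ (p - 2) by apply: powR_le_neg; lra.
  rewrite powRM in Q1; [|lra|lra].
  have Q2 : 2 `^ (-1) <= (2:R) `^ (p - 2) by apply: ler_powR; lra.
  rewrite powR_inv1 in Q2; last by lra.
  have Q3 : x `^ (p - 2) * x = x `^ (p - 1).
    have -> : p - 1 = (p - 2) + 1 by ring.
    rewrite (@powRD _ x (p - 2) 1); last by apply/implyP => _; rewrite gt_eqF //; lra.
    by rewrite powRr1 //; lra.
  have Q4 : T `^ (p - 1) <= x `^ (p - 1).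
    by apply: ge0_ler_powR => //; rewrite ?nnegrE; lra.
  rewrite TE in Q4.
  have P1 : 0 <= (1 + x) `^ (p - 2) := powR_ge0 _ _.
  have P2 : 0 <= x `^ (p - 2) := powR_ge0 _ _.
  have P3 : 0 <= 2 `^ (p - 2) :> R := powR_ge0 _ _.
  set a1 := (1 + x) `^ (p - 2) in Q1 P1 *.
  set a2 := x `^ (p - 2) in Q1 Q3 P2.
  set a3 := (2:R) `^ (p - 2) in Q1 Q2 P3.
  set a4 := x `^ (p - 1) in Q3 Q4.
  have e8 : 8 * K / (p - 1) * (p - 1) = 8 * K by field; lra.
  have R1 : 2^-1 * a2 * x <= a1 * x.
    have : 2^-1 * a2 <= a1 by nra.
    move=> h; nra.
  have R2 : p * (p - 1) / 2 * (2^-1 * a2 * x) * x >= 2 * K * p * x.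
    rewrite -(mulrA 2^-1) Q3.
    have h : (p - 1) * a4 >= 8 * K.
      have : (p - 1) * (1 + 8 * K / (p - 1)) <= (p - 1) * a4 by apply: ler_wpM2l; lra.
      have -> : (p - 1) * (1 + 8 * K / (p - 1)) = p - 1 + 8 * K by field; lra.
      lra.
    have h2 : 0 <= p * x * ((p - 1) * a4 - 8 * K) by apply: mulr_ge0; [apply: mulr_ge0|]; lra.
    lra.
  have h3 : 0 <= (p * (p - 1) / 2 * x) * (a1 * x - 2^-1 * a2 * x).
    apply: mulr_ge0; last by lra.
    apply: mulr_ge0 => //; apply: divr_ge0; nra.
  rewrite expr2; lra.
- rewrite add0r.
  have -> : p * eps * A `^ (p - 2) * B ^+ 2 = Ap * (p * eps * x ^+ 2) by rewrite e2 /x; field.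
  apply: ler_wpM2l; first exact: ltW.
  apply: le_trans hy.
  have := @KL _ p (1 + T) y pp; rewrite ny addrC => /(_ ltac:(lra)).
  apply: le_trans.
  rewrite y2.
  have : 0 <= x ^+ 2 := sqr_ge0 _.
  set c := (1 + T) `^ (p - 2) in epsT *.
  move=> hx.
  have h : 0 <= (p * x ^+ 2) * ((p - 1) / 2 * c - eps) by apply: mulr_ge0; [apply: mulr_ge0|]; lra.
  lra.
Qed.

End Main.

Unset Implicit Arguments.

Theorem lemma5 (R : realType) (K p : R) :
  0 <= K -> 1 < p < 2 ->
  exists eps : R, 0 < eps < (p - 1) / 2 /\
    forall (d : nat) (a b : 'rV[R]_d),
      Psi a b p >= Gamma a b K eps p.
Proof.
move=> K0 pp; have /andP[p1 p2] := pp.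
set B0 := 1 + 8 * K / (p - 1).
have B01 : 1 <= B0.
  have : 0 <= 8 * K / (p - 1) by apply: divr_ge0; lra.
  rewrite /B0; lra.
set T := B0 `^ (1 / (p - 1)).
have T1 : 1 <= T.
  rewrite /T -[X in X <= _](powRr0 B0); apply: ler_powR => //.
  by apply: divr_ge0; lra.
have TE : T `^ (p - 1) = 1 + 8 * K / (p - 1).
  rewrite /T -powRrM mulrC mulrA mulr1 divff ?powRr1 //; first lra.
  by apply/eqP; lra.
set X0 := 2 * (1 + T) ^+ 2 - 1.
have X01 : 1 < X0 by rewrite /X0; nra.
set e := (2 - p) / 2.
have e0 : 0 < e by rewrite /e; lra.
have Xe : 1 < X0 `^ e.
  have := @gt0_ltr_powR R e e0 1 X0; rewrite powR1; apply => //; rewrite nnegrE; lra.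
have Xe0 : 0 < X0 `^ e by lra.
exists ((p - 1) / 2 * X0 `^ (- e)).
rewrite powRN.
have th : theta ((p - 1) / 2 * (X0 `^ e)^-1) p = T.
  rewrite /theta.
  have -> : (p - 1) / (2 * ((p - 1) / 2 * (X0 `^ e)^-1)) = X0 `^ e.
    by field; apply/andP; split; [apply/eqP; lra | apply/eqP; lra].
  rewrite -powRrM.
  have -> : e * (2 / (2 - p)) = 1 by rewrite /e; field; apply/eqP; lra.
  rewrite powRr1; last lra.
  have -> : 2^-1 * X0 + 2^-1 = (1 + T) ^+ 2 by rewrite /X0; field.
  by rewrite sqrtr_sqr ger0_norm; [ring | lra].
split.
  apply/andP; split.
    by apply: mulr_gt0; [lra | rewrite invr_gt0].
  have : (X0 `^ e)^-1 < 1 by rewrite invf_lt1.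
  move=> h; have : 0 < (p - 1) / 2 by lra.
  move=> h2; nra.
have epsT : (p - 1) / 2 * (X0 `^ e)^-1 <= (p - 1) / 2 * (1 + T) `^ (p - 2).
  apply: ler_wpM2l; first lra.
  rewrite -powRN (pow_sq (p - 2) (_ : 0 <= 1 + T)); last lra.
  have -> : - e = (p - 2) / 2 by rewrite /e; field.
  apply: powR_le_neg; [lra | nra | rewrite /X0; nra].
move=> d a b.
rewrite /Psi /Gamma th.
set A := normv a; set B := normv b; set s := dotv a b; set N := normv (a + b).
have CSab : `|s| <= A * B := CS a b.
have A0 : 0 <= A := normv_ge0 a.
have B0' : 0 <= B := normv_ge0 b.
have N0 : 0 <= N := normv_ge0 (a + b).
have [Az|Ap] := eqVneq A 0.
  have s0 : s = 0 by apply/normr0_eq0/eqP; rewrite eq_le normr_ge0 andbT; move: CSab; rewrite Az mul0r.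
  rewrite Az s0 !mulr0 powR0; last by apply/eqP; lra.
  rewrite !powR0; [|apply/eqP; lra|apply/eqP; lra].
  rewrite !mulr0 !mul0r if_same subr0 if_same addr0.
  by rewrite if_same subr0; exact: powR_ge0.
have An : a != 0.
  by apply: contraNneq Ap => az; rewrite /A az normv0.
rewrite An.
have Apos : 0 < A by rewrite lt_def Ap A0.
apply: scalar_main => //.
- by apply: mulr_gt0; [lra | rewrite invr_gt0].
- by rewrite /N /A /B /s normvD_sq.
Qed.
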